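(* Let $\mathcal{H}$ be a real $m^{\rm th}$-order $n$-dimensional Hankel tensor generated by ${\bf h}\in\mathbb{R}^{m(n-1)+1}$, where $m(n-1)$ is even, and let $r$ be the rank of its associated Hankel matrix $H$. Then $\mathcal{H}$ is a strong Hankel tensor if and only if either it admits a Vandermonde decomposition with all positive coefficients $$\mathcal{H}=\sum_{k=1}^r\alpha_k{\bf v}_k^{\circ m},\quad \alpha_k>0,\quad {\bf v}_k=(1,\xi_k,\dots,\xi_k^{n-1})^\top,\ \xi_k\in\mathbb{R},$$ or it admits an augmented Vandermonde decomposition with all positive coefficients $$\mathcal{H}=\sum_{k=1}^{r-1}\alpha_k{\bf v}_k^{\circ m}+\alpha_r{\bf e}_n^{\circ m},\quad \alpha_k>0,\quad {\bf v}_k=(1,\xi_k,\dots,\xi_k^{n-1})^\top,\ \xi_k\in\mathbb{R}.$$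
   Context: The Hankel tensor generated by ${\bf h}=(h_0,\dots,h_{m(n-1)})$ has entries $\mathcal{H}_{i_1\dots i_m}=h_{i_1+\dots+i_m}$, $0\le i_j\le n-1$. Its associated Hankel matrix is the square Hankel matrix $H$ of size $\frac{m(n-1)}{2}+1$ with $H_{ij}=h_{i+j}$ ($0\le i,j\le m(n-1)/2$). $\mathcal{H}$ is a strong Hankel tensor if $H$ is positive semi-definite. ${\bf v}^{\circ m}$ is the rank-one tensor with entries $v_{i_1}v_{i_2}\cdots v_{i_m}$, and ${\bf e}_n=(0,\dots,0,1)^\top\in\mathbb{R}^n$. *)

(* Defs.v *)
From HB Require Import structures.
From mathcomp Require Import all_boot all_order all_algebra.
From mathcomp Require Import reals.
Set Implicit Arguments. Unset Strict Implicit. Unset Printing Implicit Defensive.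
Import Order.TTheory GRing.Theory Num.Theory.
Local Open Scope ring_scope.

Notation tensor R m n := {ffun {ffun 'I_m -> 'I_n} -> R}.

Definition hankel_tensor (R : realType) (m n : nat)
  (h : 'rV[R]_(m * n.-1).+1) : tensor R m n :=
  [ffun idx : {ffun 'I_m -> 'I_n} => h 0 (inord (\sum_(j < m) (idx j : nat)))].

Definition hankel_matrix (R : realType) (m n : nat)
  (h : 'rV[R]_(m * n.-1).+1) : 'M[R]_((m * n.-1)./2.+1) :=
  \matrix_(i, j) h 0 (inord (i + j)).

Definition psd (R : realType) (k : nat) (A : 'M[R]_k) : Prop :=
  A^T = A /\ forall x : 'cV[R]_k, 0 <= (x^T *m A *m x) 0 0.

Definition strong_hankel (R : realType) (m n : nat) (h : 'rV[R]_(m * n.-1).+1) : Prop :=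
  psd (hankel_matrix h).

Definition rank1 (R : realType) (m n : nat) (v : 'rV[R]_n) : tensor R m n :=
  [ffun idx : {ffun 'I_m -> 'I_n} => \prod_(j < m) v 0 (idx j)].

Definition vandv (R : realType) (n : nat) (xi : R) : 'rV[R]_n :=
  \row_(i < n) xi ^+ i.

Definition e_last (R : realType) (n : nat) : 'rV[R]_n :=
  \row_(i < n) (i.+1 == n)%:R.

Definition tscale (R : realType) (m n : nat) (a : R) (T : tensor R m n) : tensor R m n :=
  [ffun idx => a * T idx].

(* Main.v *)
Require Import Defs.
From HB Require Import structures.
From mathcomp Require Import all_boot all_order all_algebra.
From mathcomp Require Import reals complex.
From mathcomp Require Import ring lra zify.
From Stdlib Require Import Classical.
Import Order.TTheory GRing.Theory Num.Theory.
Local Open Scope ring_scope.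
Set Implicit Arguments. Unset Strict Implicit. Unset Printing Implicit Defensive.

Section Quad.
Local Open Scope complex_scope.
Lemma real_or_quad (R : realType) (g : {poly R}) : (1 < size g)%N ->
  (exists x, root g x) \/
  exists a b (g' : {poly R}), b != 0 /\ g = (('X - a%:P)^+2 + (b^+2)%:P) * g'.
Proof.
move=> hg.
have : size (map_poly (real_complex R) g) != 1%N.
  by rewrite size_map_poly; apply: contraTneq hg => ->.
case/closed_rootP => z; case: z => a b hz.
case: (eqVneq b 0) => hb.
  left; exists a; rewrite -(fmorph_root (real_complex R)).
  by move: hz; rewrite hb.
right; exists a, b; set t := (('X - a%:P)^+2 + (b^+2)%:P).
have st : size t = 3%N.
  rewrite size_polyDl size_exp_XsubC //.
  by apply: leq_ltn_trans (size_polyC_leq1 _) _.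
have t0 : t != 0 by rewrite -size_poly_eq0 st.
exists (g %/ t); split => //.
set r := g %% t.
suff r0 : r = 0 by rewrite {1}(divp_eq g t) -/r r0 addr0 mulrC.
have sr : (size r <= 2)%N by rewrite -ltnS -st ltn_modp.
have ht : (map_poly (real_complex R) t).[a +i* b] = 0.
  rewrite /t rmorphD rmorphXn /= map_polyC /= rmorphB /= map_polyX map_polyC /=.
  rewrite hornerD hornerC horner_exp hornerXsubC expr2; simpc.
  by apply/eqP; rewrite eq_complex /= eqxx andbT addrC subr_eq0 expr2.
have hr : (map_poly (real_complex R) r).[a +i* b] = 0.
  move: hz; rewrite /root {1}(divp_eq g t) rmorphD rmorphM /= hornerD hornerM ht mulr0 add0r.
  by move/eqP.
move: hr; rewrite (horner_coef_wide _ (n := 2)); last by rewrite size_map_poly.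
rewrite !big_ord_recl big_ord0 /= !coef_map /= expr0 expr1 mulr1 addr0.
set r0 := r`_0; set r1 := r`_(bump 0 0).
simpc => [[]] e1 e2.
have r1z : r1 = 0.
  by move/eqP: e2; rewrite mulf_eq0 (negbTE hb) orbF => /eqP.
have r0z : r0 = 0 by move: e1; rewrite r1z mul0r addr0.
apply/polyP => k; rewrite coef0.
case: k => [|[|k]]; [exact: r0z| exact: r1z|].
by rewrite nth_default // (leq_trans sr).
Qed.

End Quad.

Section Moment.
Variable R : realType.
Variable N : nat.
Variable hh : nat -> R.

Definition Lf (P : {poly R}) : R := \sum_(k < N.*2.+1) P`_k * hh k.

Lemma LfD P Q : Lf (P + Q) = Lf P + Lf Q.
Proof. by rewrite /Lf -big_split /=; apply: eq_bigr => k _; rewrite coefD mulrDl. Qed.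
Lemma LfZ c P : Lf (c *: P) = c * Lf P.
Proof. by rewrite /Lf mulr_sumr; apply: eq_bigr => k _; rewrite coefZ mulrA. Qed.
Lemma Lf0 : Lf 0 = 0.
Proof. by rewrite /Lf big1 // => k _; rewrite coef0 mul0r. Qed.
Lemma LfN P : Lf (- P) = - Lf P.
Proof. by rewrite -scaleN1r LfZ mulN1r. Qed.
Lemma LfB P Q : Lf (P - Q) = Lf P - Lf Q.
Proof. by rewrite LfD LfN. Qed.
Lemma Lf_sum (I : Type) (r : seq I) (Pr : pred I) (F : I -> {poly R}) :
  Lf (\sum_(i <- r | Pr i) F i) = \sum_(i <- r | Pr i) Lf (F i).
Proof. exact: (big_morph Lf LfD Lf0). Qed.
Lemma LfXn k : (k <= N.*2)%N -> Lf 'X^k = hh k.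
Proof.
move=> hk; have hk' : (k < N.*2.+1)%N by rewrite ltnS.
rewrite /Lf (bigD1 (Ordinal hk')) //= coefXn eqxx mul1r big1 ?addr0 //.
move=> j /eqP hj; rewrite coefXn; case: eqP => [e|]; last by rewrite mul0r.
by case: hj; apply: val_inj.
Qed.

Lemma poly_wide (f : {poly R}) (n : nat) : (size f <= n)%N -> f = \sum_(i < n) f`_i *: 'X^i.
Proof.
move=> hs; rewrite -poly_def; apply/polyP => k; rewrite coef_poly.
by case: ltnP => // hk; rewrite nth_default // (leq_trans hs hk).
Qed.

Lemma Lf_mul (f g : {poly R}) : (size f <= N.+1)%N -> (size g <= N.+1)%N ->
  Lf (f * g) = \sum_(i < N.+1) \sum_(j < N.+1) f`_i * g`_j * hh (i + j).
Proof.
move=> hf hg; rewrite {1}(poly_wide hf) {1}(poly_wide hg) mulr_suml Lf_sum.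
apply: eq_bigr => i _; rewrite mulr_sumr Lf_sum; apply: eq_bigr => j _.
rewrite -scalerAl -scalerAr scalerA -exprD LfZ LfXn //.
have := ltn_ord i; have := ltn_ord j; lia.
Qed.

Hypothesis Hpsd : forall f : {poly R}, (size f <= N.+1)%N -> 0 <= Lf (f * f).

Lemma kernel (f : {poly R}) : (size f <= N.+1)%N -> Lf (f * f) = 0 ->
  forall g : {poly R}, (size g <= N.+1)%N -> Lf (f * g) = 0.
Proof.
move=> hf h0 g hg; set c := Lf (f * g); set d := Lf (g * g).
have hd : 0 <= d := Hpsd hg.
have key : forall t, 0 <= t * c *+ 2 + t * t * d.
  move=> t.
  have hs : (size (f + t *: g)%R <= N.+1)%N.
    apply: leq_trans (size_polyD _ _) _; rewrite geq_max hf /=.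
    exact: leq_trans (size_scale_leq _ _) hg.
  have := Hpsd hs.
  rewrite mulrDl !mulrDr -!scalerAl -!scalerAr scalerA !LfD !LfZ h0 (mulrC g f) -/c -/d.
  by rewrite add0r addrA mulr2n.
have := key (- c / (d + 1)).
have hd1 : 0 < d + 1 by lra.
set t := - c / (d + 1).
have ht : t * (d + 1) = - c by rewrite /t mulfVK // gt_eqF.
move=> H.
have H2 : 0 <= (t * c *+ 2 + t * t * d) * ((d + 1) * (d + 1)) by apply: mulr_ge0 => //; nra.
have : 0 <= - (c * c) * (d + 2).
  suff -> : - (c * c) * (d + 2) = (t * c *+ 2 + t * t * d) * ((d + 1) * (d + 1)) by [].
  have hc : c = - (t * (d + 1)) by rewrite ht opprK.
  rewrite hc; ring.
nra.
Qed.


Lemma Lf_mul_expand (q g : {poly R}) :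
  Lf (q * g) = \sum_(t < size g) g`_t * Lf (q * 'X^t).
Proof.
rewrite {1}(poly_wide (leqnn (size g))) mulr_sumr Lf_sum.
by apply: eq_bigr => t _; rewrite -scalerAr LfZ.
Qed.

Lemma propagate (q : {poly R}) (p : nat) : size q = p.+1 -> (p <= N)%N ->
  Lf (q * q) = 0 -> forall i, (i + p < N.*2)%N -> Lf (q * 'X^i) = 0.
Proof.
move=> hq hp h0 i; elim/ltn_ind: i => i IH hi.
have hqs : (size q <= N.+1)%N by rewrite hq.
case: (leqP i N) => hiN.
  by apply: kernel => //; rewrite size_polyXn.
have q0 : q != 0 by rewrite -size_poly_eq0 hq.
have hw : (size (q * 'X^(i - N))%R <= N.+1)%N by rewrite size_mulXn // hq; lia.
have hww : Lf ((q * 'X^(i - N)) * (q * 'X^(i - N))) = 0.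
  have -> : (q * 'X^(i - N)) * (q * 'X^(i - N)) = q * (q * 'X^((i - N) + (i - N))).
    by rewrite exprD; ring.
  rewrite Lf_mul_expand big1 // => t _.
  have ht : (t < (i - N + (i - N)) + size q)%N by rewrite -size_mulXn.
  rewrite hq in ht.
  rewrite IH ?mulr0 //; lia.
have := kernel hw hww (g := 'X^N); rewrite size_polyXn => /(_ (ltnSn _)).
by rewrite -mulrA -exprD subnK // ltnW.
Qed.

Section Core.
Variables (p : nat) (q : {poly R}).
Hypotheses (qmon : q \is monic) (qsz : size q = p.+1) (hpN : (p <= N)%N).
Hypothesis H1 : forall g : {poly R}, g != 0 -> (size g <= p)%N -> 0 < Lf (g * g).
Hypothesis H2 : forall i, (i + p < N.*2)%N -> Lf (q * 'X^i) = 0.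

Lemma H2' (g : {poly R}) : (size g + p <= N.*2)%N -> Lf (q * g) = 0.
Proof.
move=> hg; rewrite Lf_mul_expand big1 // => t _.
by rewrite H2 ?mulr0 //; have := ltn_ord t; lia.
Qed.

Lemma q_neq0 : q != 0.
Proof. by rewrite -size_poly_eq0 qsz. Qed.

Lemma no_double (x : R) (g : {poly R}) : q <> ('X - x%:P)^+2 * g.
Proof.
move=> E.
have g0 : g != 0 by apply: contraNneq q_neq0 => g0; rewrite E g0 mulr0.
have Xx0 : ('X - x%:P) != 0 by rewrite -size_poly_eq0 size_XsubC.
have hsz : size g = p.-1.
  move: qsz; rewrite E size_mul ?size_exp_XsubC ?expf_neq0 // => hh1; set sg := size g in hh1 *; lia.
have hp1 : (1 <= p)%N by move: qsz; rewrite E size_mul ?size_exp_XsubC ?expf_neq0 // -!subn1; lia.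
have h0 : Lf (q * g) = 0 by apply: H2'; lia.
have hpos : 0 < Lf ((('X - x%:P) * g) * (('X - x%:P) * g)).
  apply: H1; first by rewrite mulf_neq0.
  by rewrite size_mul // size_XsubC hsz; lia.
move: hpos; have -> : (('X - x%:P) * g) * (('X - x%:P) * g) = q * g by rewrite E; ring.
by rewrite h0 ltxx.
Qed.

Lemma no_quad (a b : R) (g : {poly R}) : b != 0 ->
  q <> (('X - a%:P)^+2 + (b^+2)%:P) * g.
Proof.
move=> hb E.
have st : size (('X - a%:P)^+2 + (b^+2)%:P) = 3.
  rewrite size_polyDl size_exp_XsubC //.
  by apply: leq_ltn_trans (size_polyC_leq1 _) _.
have t0 : (('X - a%:P)^+2 + (b^+2)%:P) != 0 by rewrite -size_poly_eq0 st.
have g0 : g != 0 by apply: contraNneq q_neq0 => g0; rewrite E g0 mulr0.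
have Xx0 : ('X - a%:P) != 0 by rewrite -size_poly_eq0 size_XsubC.
have hsz : size g = p.-1.
  move: qsz; rewrite E size_mul // st => hh1; set sg := size g in hh1 *; lia.
have hp1 : (1 <= p)%N by move: qsz; rewrite E size_mul // st => hh1; set sg := size g in hh1; lia.
have h0 : Lf (q * g) = 0 by apply: H2'; lia.
have hpos1 : 0 < Lf ((('X - a%:P) * g) * (('X - a%:P) * g)).
  apply: H1; first by rewrite mulf_neq0.
  by rewrite size_mul // size_XsubC hsz; lia.
have hpos2 : 0 < Lf (g * g) by apply: H1 => //; rewrite hsz; lia.
have : Lf (q * g) = Lf ((('X - a%:P) * g) * (('X - a%:P) * g)) + b ^+ 2 * Lf (g * g).
  rewrite -LfZ -LfD E; congr Lf.
  by rewrite -mul_polyC; ring.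
rewrite h0 => h.
have : 0 < b ^+ 2 * Lf (g * g) by rewrite mulr_gt0 // exprn_even_gt0.
move: h hpos1; lra.
Qed.


Lemma split_gen (d : nat) : forall (s : seq R) (g : {poly R}), uniq s ->
  q = \prod_(x <- s) ('X - x%:P) * g -> size g = d.+1 ->
  exists s' : seq R, uniq s' /\ q = \prod_(x <- s') ('X - x%:P).
Proof.
elim: d => [|d IH] s g us E sg.
  exists s; split => //.
  have g1 : g = (g`_0)%:P by apply: size1_polyC; rewrite sg.
  have hl : lead_coef q = 1 := monicP qmon.
  have hg0 : 1 = g`_0.
    have : lead_coef q = g`_0 by rewrite E lead_coef_monicM ?monic_prod_XsubC // {1}g1 lead_coefC.
    by rewrite hl.
  by rewrite E g1 -hg0 mulr1.
have hsz1 : (1 < size g)%N by rewrite sg.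
have [[x rx]|[a [b [g' [hb Eg]]]]] := real_or_quad hsz1.
  have [g'' Eg] := factor_theorem _ _ rx.
  case: (boolP (x \in s)) => xs.
    exfalso; apply: (@no_double x (\prod_(y <- rem x s) ('X - y%:P) * g'')).
    by rewrite E Eg (big_rem x xs) /=; ring.
  apply: (IH (x :: s) g'') => //=; first by rewrite xs us.
    by rewrite E Eg big_cons; ring.
  have g0 : g'' != 0.
    by apply/eqP => h; move: sg; rewrite Eg h mul0r size_poly0.
  move: sg; rewrite Eg size_mul ?size_XsubC //; last by rewrite -size_poly_eq0 size_XsubC.
  move=> hh1; set sg := size g'' in hh1 *; lia.
exfalso; apply: (@no_quad a b (\prod_(x <- s) ('X - x%:P) * g') hb).
by rewrite E Eg; ring.
Qed.

Lemma split_q : exists s : seq R, uniq s /\ q = \prod_(x <- s) ('X - x%:P).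
Proof. by apply: (@split_gen p [::] q) => //; rewrite big_nil mul1r. Qed.

Definition lag (s : seq R) (x : R) : {poly R} :=
  (\prod_(y <- s | y != x) (x - y))^-1 *: \prod_(y <- s | y != x) ('X - y%:P).

Lemma lag_eval s x z : z \in s -> (lag s x).[z] = (z == x)%:R.
Proof.
move=> zs; rewrite /lag hornerZ horner_prod.
under [in X in _ * X]eq_bigr do rewrite hornerXsubC.
case: eqP => [->|/eqP zx].
  rewrite mulVf //; rewrite prodf_seq_neq0; apply/allP => y _; apply/implyP => yx.
  by rewrite subr_eq0 eq_sym.
have -> : \prod_(y <- s | y != x) (z - y) = 0.
  by apply/eqP; rewrite prodf_seq_eq0; apply/hasP; exists z => //; rewrite zx subrr eqxx.
by rewrite mulr0.
Qed.

Lemma lag_eq s x : x \in s -> (lag s x).[x] = 1.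
Proof. by move=> xs; rewrite lag_eval // eqxx. Qed.

Lemma lag_neq s x y : y \in s -> y != x -> (lag s x).[y] = 0.
Proof. by move=> ys yx; rewrite lag_eval // (negbTE yx). Qed.

Lemma lag_size s x : x \in s -> (size (lag s x) <= size s)%N.
Proof.
move=> xs; apply: leq_trans (size_scale_leq _ _) _.
rewrite -big_filter size_prod_XsubC size_filter.
rewrite -(count_predC (fun y => y != x) s) -addn1 leq_add2l -has_count.
by apply/hasP; exists x => //=; rewrite eqxx.
Qed.

Lemma interp s (v : {poly R}) : uniq s -> (size v <= size s)%N ->
  v = \sum_(x <- s) v.[x] *: lag s x.
Proof.
move=> us hv; apply/eqP; rewrite -subr_eq0; apply/eqP.
set D := v - _.
case: (eqVneq D 0) => // D0; exfalso.
have hroots : all (root D) s.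
  apply/allP => z zs; rewrite /root /D hornerD hornerN horner_sum (bigD1_seq z) //=.
  rewrite hornerZ lag_eq // mulr1 big1_seq ?addr0 ?subrr //.
  move=> x /andP [xz xs]; rewrite hornerZ lag_neq ?mulr0 //.
  by rewrite eq_sym.
have := max_poly_roots D0 hroots us.
suff : (size D <= size s)%N by move=> h1 h2; move: (leq_trans h2 h1); rewrite ltnn.
apply: leq_trans (size_polyD _ _) _; rewrite geq_max hv size_polyN.
rewrite big_seq; apply: (big_ind (fun P : {poly R} => size P <= size s)%N).
- by rewrite size_poly0.
- by move=> P1 P2 h1 h2; apply: leq_trans (size_polyD _ _) _; rewrite geq_max h1 h2.
- by move=> x xs; apply: leq_trans (size_scale_leq _ _) _; apply: lag_size.
Qed.

Section WithS.
Variable s : seq R.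
Hypotheses (us : uniq s) (Eq : q = \prod_(x <- s) ('X - x%:P)).

Lemma size_s : size s = p.
Proof. by move: qsz; rewrite Eq size_prod_XsubC => -[]. Qed.

Lemma q_root x : x \in s -> q.[x] = 0.
Proof. by move=> xs; apply/eqP; rewrite Eq -/(root _ x) root_prod_XsubC. Qed.

Lemma Lmu (P : {poly R}) : (size P <= N.*2)%N ->
  Lf P = \sum_(x <- s) Lf (lag s x) * P.[x].
Proof.
move=> hP.
rewrite {1}(divp_eq P q) LfD mulrC H2' ?add0r; last first.
  rewrite size_divp ?q_neq0 // qsz /=.
  set sP := size P in hP *; lia.
rewrite {1}(interp (v := P %% q) us); last first.
  by rewrite size_s -ltnS -qsz ltn_modp q_neq0.
rewrite Lf_sum; apply: eq_big_seq => x xs; rewrite LfZ mulrC; congr (_ * _).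
by rewrite {2}(divp_eq P q) hornerD hornerM q_root // mulr0 add0r.
Qed.

Lemma alpha_pos x : x \in s -> 0 < Lf (lag s x).
Proof.
move=> xs.
have lx0 : lag s x != 0.
  apply/negP => /eqP h; move: (lag_eq xs); rewrite h horner0 => /esym /eqP.
  by rewrite oner_eq0.
have hsz : (size (lag s x) <= p)%N by rewrite -size_s lag_size.
have hL : Lf (lag s x * lag s x) = Lf (lag s x).
  rewrite Lmu; last first.
    apply: leq_trans (size_polyMleq _ _) _.
    set sl := size (lag s x) in hsz *; lia.
  rewrite (bigD1_seq x) //= hornerM lag_eq // !mulr1 big1_seq ?addr0 //.
  move=> y /andP [yx ys].
  by rewrite hornerM lag_neq // mul0r mulr0.
by rewrite -hL; exact: H1.
Qed.

Lemma moments k : (k < N.*2)%N -> hh k = \sum_(x <- s) Lf (lag s x) * x ^+ k.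
Proof.
move=> hk; rewrite -(LfXn (ltnW hk)) Lmu ?size_polyXn //.
by apply: eq_bigr => x _; rewrite hornerXn.
Qed.

Lemma top_moment : hh N.*2 = \sum_(x <- s) Lf (lag s x) * x ^+ N.*2 +
  Lf ((q * 'X^(N - p)) * (q * 'X^(N - p))).
Proof.
set w := q * 'X^(N - p).
have wm : w \is monic by rewrite /w monicMr ?monicXn.
have ws : size w = N.+1 by rewrite size_mulXn ?q_neq0 // qsz; lia.
have wws : size (w * w) = N.*2.+1.
  by rewrite size_monicM ?monic_neq0 // ws; lia.
have hP : (size (w * w - 'X^(N.*2))%R <= N.*2)%N.
  apply/leq_sizeP => j hj; rewrite coefB coefXn.
  case: (ltngtP j N.*2) => hjN.
  - by move: hj; rewrite leqNgt hjN.
  - by rewrite nth_default ?wws // subr0.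
  - have : lead_coef (w * w) = 1 by apply/monicP; rewrite monicMl.
    by rewrite lead_coefE wws /= hjN => ->; rewrite subrr.
have := Lmu hP.
rewrite LfB LfXn // => h.
have e : Lf (w * w) - hh N.*2 = - \sum_(x <- s) Lf (lag s x) * x ^+ N.*2.
  rewrite h -sumrN; apply: eq_big_seq => x xs.
  by rewrite hornerD hornerN hornerM /w hornerM q_root // !mul0r hornerXn sub0r mulrN.
have -> : hh N.*2 = Lf (w * w) - (Lf (w * w) - hh N.*2) by rewrite opprB addrC subrK.
by rewrite e opprK addrC.
Qed.

End WithS.

Lemma core : exists s : seq R, [/\ uniq s, size s = p,
  q = \prod_(x <- s) ('X - x%:P),
  (forall x, x \in s -> 0 < Lf (lag s x)) &
  (forall k, (k < N.*2)%N -> hh k = \sum_(x <- s) Lf (lag s x) * x ^+ k) /\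
  hh N.*2 = \sum_(x <- s) Lf (lag s x) * x ^+ N.*2 +
    Lf ((q * 'X^(N - p)) * (q * 'X^(N - p)))].
Proof.
have [s [us Eq]] := split_q; exists s; split => //.
- exact: size_s.
- exact: alpha_pos.
split; [exact: moments | exact: top_moment].
Qed.

End Core.

Lemma min_exists (P : nat -> Prop) : (exists k, P k) ->
  exists k, P k /\ forall j, (j < k)%N -> ~ P j.
Proof.
case=> k; elim/ltn_ind: k => k IH Pk.
case: (classic (exists j, (j < k)%N /\ P j)) => [[j [jk Pj]]|H]; first exact: IH jk Pj.
by exists k; split => // j jk Pj; apply: H; exists j.
Qed.

Lemma normalize (f : {poly R}) : f != 0 ->
  exists c, [/\ c != 0, (c *: f) \is monic & size (c *: f) = size f].
Proof.
move=> f0; have l0 : lead_coef f != 0 by rewrite lead_coef_eq0.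
exists (lead_coef f)^-1; split; first by rewrite invr_eq0.
  by apply/monicP; rewrite lead_coefZ mulVf.
by rewrite size_scale // invr_eq0.
Qed.

Definition goodq p (q : {poly R}) := [/\ q \is monic, size q = p.+1, (p <= N)%N,
   (forall g : {poly R}, g != 0 -> (size g <= p)%N -> 0 < Lf (g * g)) &
   (forall i, (i + p < N.*2)%N -> Lf (q * 'X^i) = 0)].

Lemma exists_q : exists p q, goodq p q.
Proof.
case: (classic (exists k, (k <= N)%N /\ exists f : {poly R},
   [/\ f != 0, size f = k.+1 & Lf (f * f) = 0])) => [Hex|Hno].
  have [p [[hpN [f [f0 sf Lff]]] hmin]] := min_exists Hex.
  have [c [c0 mq sq]] := normalize f0.
  exists p, (c *: f).
  have hq0 : Lf ((c *: f) * (c *: f)) = 0 by rewrite -scalerAl -scalerAr !LfZ Lff !mulr0.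
  split => //; first by rewrite sq.
    move=> g g0 sg; have sg0 : (0 < size g)%N by rewrite size_poly_gt0.
    rewrite lt_def Hpsd ?andbT; last by apply: leq_trans sg _; lia.
    apply/eqP => hg; apply: (hmin (size g).-1); first by lia.
    split; first by lia.
    by exists g; split => //; rewrite prednK.
  by apply: propagate => //; rewrite sq.
set A : 'M[R]_(N.+1, N) := \matrix_(j, i) hh (j + i).
have hk : kermx A != 0.
  rewrite -mxrank_eq0 mxrank_ker; have := rank_leq_col A.
  by move=> h; rewrite subn_eq0 -ltnNge ltnS.
have [i0 [j0 hij]] : exists i j, kermx A i j != 0.
  case: (classic (exists i j, kermx A i j != 0)) => // H; exfalso.
  move/negP: hk; apply; apply/eqP/matrixP => i j; rewrite [X in _ = X]mxE.
  by apply/eqP/negPn/negP => h; apply: H; exists i, j.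
set u := row i0 (kermx A).
have uA : u *m A = 0 by rewrite /u -row_mul mulmx_ker row0.
set f : {poly R} := \poly_(j < N.+1) u 0 (inord j).
have sf : (size f <= N.+1)%N by apply: size_poly.
have hfX : forall i, (i < N)%N -> Lf (f * 'X^i) = 0.
  move=> i hi; have hi' : (i < N.+1)%N by lia.
  rewrite Lf_mul // ?size_polyXn //.
  transitivity ((u *m A) 0 (Ordinal hi)); last by rewrite uA mxE.
  rewrite [RHS]mxE; apply: eq_bigr => a _.
  rewrite (bigD1 (Ordinal hi')) //= coefXn eqxx mulr1 big1 ?addr0; last first.
    move=> b /eqP hb; rewrite coefXn; case: eqP => [e|]; last by rewrite mulr0 mul0r.
    by case: hb; apply: val_inj.
  by rewrite coef_poly ltn_ord inord_val /A mxE.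
have f0 : f != 0.
  apply/eqP => /(congr1 (fun P : {poly R} => P`_j0)).
  rewrite coef_poly ltn_ord inord_val coef0 /u mxE => h; move: hij; by rewrite h eqxx.
have Lff : (size f <= N)%N -> Lf (f * f) = 0.
  move=> sfN; rewrite Lf_mul_expand big1 // => t _.
  by rewrite hfX ?mulr0 //; apply: leq_trans (ltn_ord t) sfN.
have sfe : size f = N.+1.
  apply/eqP; rewrite eqn_leq sf /= ltnNge; apply/negP => sfN.
  apply: Hno; exists (size f).-1; split; first by lia.
  exists f; split => //; last exact: Lff.
  by rewrite prednK // size_poly_gt0.
have [c [c0 mq sq]] := normalize f0.
exists N, (c *: f); split => //; first by rewrite sq.
  move=> g g0 sg; have sg0 : (0 < size g)%N by rewrite size_poly_gt0.
  rewrite lt_def Hpsd ?andbT; last by lia.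
  apply/eqP => hg; apply: Hno; exists (size g).-1; split; first by lia.
  by exists g; split => //; rewrite prednK.
move=> i hi; rewrite -scalerAl LfZ hfX ?mulr0 //; lia.
Qed.

End Moment.

Section Mat.
Variable R : realType.
Variable N : nat.
Variable hh : nat -> R.

Definition HM : 'M[R]_(N.+1) := \matrix_(i, j) hh (i + j).

Lemma factor sz (W : 'M[R]_(sz, N.+1)) (d : 'I_sz -> R) :
  (forall i j : 'I_N.+1, hh (i + j) = \sum_k d k * W k i * W k j) ->
  HM = W^T *m diag_mx (\row_k d k) *m W.
Proof.
move=> H; rewrite mul_mx_diag; apply/matrixP => i j; rewrite !mxE H.
by apply: eq_bigr => k _; rewrite !mxE; ring.
Qed.


Lemma psd_factor sz (W : 'M[R]_(sz, N.+1)) (d : 'I_sz -> R) :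
  (forall k, 0 <= d k) -> HM = W^T *m diag_mx (\row_k d k) *m W -> psd HM.
Proof.
move=> d0 E; split.
  by apply/matrixP => i j; rewrite !mxE addnC.
move=> x; rewrite E.
have -> : x^T *m (W^T *m diag_mx (\row_k d k) *m W) *m x =
   (W *m x)^T *m diag_mx (\row_k d k) *m (W *m x).
  by rewrite trmx_mul !mulmxA.
rewrite mul_mx_diag mxE; apply: sumr_ge0 => k _; rewrite !mxE.
by rewrite mulrC mulrA mulr_ge0 // -expr2 sqr_ge0.
Qed.

Lemma rank_factor sz (W : 'M[R]_(sz, N.+1)) (d : 'I_sz -> R) :
  (forall k, d k != 0) -> row_free W ->
  \rank (W^T *m diag_mx (\row_k d k) *m W) = sz.
Proof.
move=> d0 rf; rewrite mxrankMfree // -mxrank_tr trmx_mul tr_diag_mx trmxK.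
rewrite mxrankMfree // mxrank_unit // unitmxE det_diag unitfE.
by apply/prodf_neq0 => k _; rewrite mxE.
Qed.

Lemma rowfree_gen sz (W : 'M[R]_(sz, N.+1)) (P : 'I_sz -> {poly R}) :
  (forall k l, \sum_j W k j * (P l)`_j = (k == l)%:R) -> row_free W.
Proof.
move=> H; apply/row_freeP; exists (\matrix_(j, l) (P l)`_j).
by apply/matrixP => k l; rewrite !mxE -H; apply: eq_bigr => j _; rewrite mxE.
Qed.

End Mat.

Section Spec.
Variable R : realType.
Variable N : nat.
Variable hh : nat -> R.

Definition Wv sz (xi : 'I_sz -> R) : 'M[R]_(sz, N.+1) := \matrix_(k, j) xi k ^+ j.
Definition We sz (xi : 'I_sz -> R) : 'M[R]_(sz.+1, N.+1) :=
  \matrix_(k, j) if unlift ord0 k is Some k' then xi k' ^+ j else ((j : nat) == N)%:R.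
Definition de sz (al : 'I_sz -> R) (a : R) (k : 'I_sz.+1) : R :=
  if unlift ord0 k is Some k' then al k' else a.

Lemma eqN2 (i j : 'I_N.+1) : ((i == N :> nat) && (j == N :> nat)) = ((i + j)%N == N.*2).
Proof.
have := ltn_ord i; have := ltn_ord j => hi hj.
apply/idP/idP; first by case/andP => /eqP -> /eqP ->; rewrite addnn.
move/eqP => e; apply/andP; split; apply/eqP; lia.
Qed.

Lemma factor_v sz (al xi : 'I_sz -> R) :
  (forall k, (k <= N.*2)%N -> hh k = \sum_(i < sz) al i * xi i ^+ k) ->
  HM N hh = (Wv xi)^T *m diag_mx (\row_k al k) *m Wv xi.
Proof.
move=> H; apply: factor => i j; rewrite H; last by have := ltn_ord i; have := ltn_ord j; lia.
by apply: eq_bigr => k _; rewrite !mxE exprD mulrA.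
Qed.

Lemma factor_e sz (al xi : 'I_sz -> R) (a : R) :
  (forall k, (k <= N.*2)%N -> hh k = \sum_(i < sz) al i * xi i ^+ k + a * (k == N.*2)%:R) ->
  HM N hh = (We xi)^T *m diag_mx (\row_k de al a k) *m We xi.
Proof.
move=> H; apply: factor => i j; rewrite H; last by have := ltn_ord i; have := ltn_ord j; lia.
rewrite big_ord_recl addrC /de !mxE unlift_none; congr (_ + _).
  by rewrite -eqN2 -mulrA -natrM mulnb.
by apply: eq_bigr => k _; rewrite !mxE liftK exprD mulrA.
Qed.

Lemma horner_wide_sum (P : {poly R}) (x : R) : (size P <= N.+1)%N ->
  \sum_(j < N.+1) x ^+ j * P`_j = P.[x].
Proof. by move=> hP; rewrite (horner_coef_wide _ hP); apply: eq_bigr => j _; rewrite mulrC. Qed.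

Lemma sum_coefN (P : {poly R}) :
  \sum_(j < N.+1) ((j : nat) == N)%:R * P`_j = P`_N.
Proof.
rewrite (bigD1 ord_max) //= eqxx mul1r big1 ?addr0 // => j hj.
have : (j : nat) != N by apply: contra hj => /eqP e; apply/eqP; apply: val_inj.
by move/negbTE => ->; rewrite mul0r.
Qed.

Lemma Wv_rowfree (s : seq R) : uniq s -> (size s <= N.+1)%N ->
  row_free (Wv (fun k : 'I_(size s) => s`_k)).
Proof.
move=> us ss; apply: (@rowfree_gen _ _ _ _ (fun l : 'I_(size s) => lag s s`_l)) => k l.
under eq_bigr do rewrite mxE.
rewrite horner_wide_sum; last by apply: leq_trans (lag_size (mem_nth 0 (ltn_ord l))) ss.
by rewrite lag_eval ?mem_nth // nth_uniq.
Qed.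

Lemma We_rowfree (s : seq R) (q : {poly R}) : uniq s -> (size s <= N)%N ->
  q = \prod_(x <- s) ('X - x%:P) ->
  row_free (We (fun k : 'I_(size s) => s`_k)).
Proof.
move=> us ss Eq.
apply: (@rowfree_gen _ _ _ _ (fun l : 'I_(size s).+1 =>
   if unlift ord0 l is Some l' then lag s s`_l' else q * 'X^(N - size s))) => k l.
under eq_bigr do rewrite mxE.
have qm : q \is monic by rewrite Eq monic_prod_XsubC.
have qs : size q = (size s).+1 by rewrite Eq size_prod_XsubC.
case: (unliftP ord0 k) => [k'|] -> ; case: (unliftP ord0 l) => [l'|] ->.
- rewrite horner_wide_sum; last first.
    exact: leq_trans (lag_size (mem_nth 0 (ltn_ord l'))) (leqW ss).
  by rewrite lag_eval ?mem_nth // nth_uniq // (inj_eq (@lift_inj _ ord0)).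
- rewrite horner_wide_sum; last by rewrite size_mulXn ?monic_neq0 // qs; lia.
  rewrite hornerM.
  have -> : q.[s`_k'] = 0 by apply/eqP; rewrite Eq -/(root _ _) root_prod_XsubC mem_nth.
  by rewrite mul0r; case: eqP => // /(congr1 val) /=; rewrite /bump /=.
- rewrite sum_coefN nth_default; last first.
    by apply: leq_trans (lag_size (mem_nth 0 (ltn_ord l'))) ss.
  by case: eqP => // /(congr1 val) /=; rewrite /bump /=.
- rewrite sum_coefN coefMXn ltnNge leq_subr /=.
  have -> : (N - (N - size s) = size s)%N by lia.
  by have := monicP qm; rewrite lead_coefE qs.
Qed.

End Spec.

Section Tensor.
Variables (R : realType) (m n : nat).

Lemma rank1_vand_entry (xi : R) (idx : {ffun 'I_m -> 'I_n}) :
  rank1 m (vandv n xi) idx = xi ^+ (\sum_j (idx j : nat)).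
Proof.
rewrite ffunE /vandv (eq_bigr (fun j => xi ^+ idx j)); last by move=> j _; rewrite mxE.
by rewrite prodrXr.
Qed.

Lemma prod_bool (b : 'I_m -> bool) : \prod_j ((b j)%:R : R) = ([forall j, b j])%:R.
Proof.
case: forallP => H.
  by rewrite big1 /= ?mulr1n // => j _; rewrite H /= mulr1n.
have : ~~ [forall j, b j] by apply/forallP.
by case/forallPn => j hj; rewrite (bigD1 j) //= (negbTE hj) /= mulr0n mul0r.
Qed.

Lemma rank1_e_entry (idx : {ffun 'I_m -> 'I_n}) : (0 < n)%N ->
  rank1 m (e_last R n) idx = (((\sum_j (idx j : nat)) == m * n.-1)%N)%:R.
Proof.
move=> hn; rewrite ffunE /e_last (eq_bigr (fun j => (((idx j : nat).+1 == n)%:R : R))); last first.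
  by move=> j _; rewrite mxE.
rewrite prod_bool.
have hle : forall j : 'I_m, (idx j <= n.-1)%N by move=> j; rewrite -ltnS prednK.
have L := @leqif_sum _ predT (fun j => (idx j : nat) == n.-1) (fun j => (idx j : nat))
   (fun _ => n.-1) (fun j _ => leqif_eq (hle j)).
have E : (\sum_j (idx j : nat) == \sum_(j < m) n.-1)%N = [forall j, (idx j : nat) == n.-1] := L.2.
rewrite sum_nat_const card_ord in E.
rewrite E; congr (_%:R); congr nat_of_bool; apply/idP/idP => /forallP H; apply/forallP => j; move: (H j) => /eqP e; apply/eqP.
  lia.
lia.
Qed.

Lemma idx_surj (m' k : nat) : (0 < n)%N -> (k <= m' * n.-1)%N ->
  exists idx : {ffun 'I_m' -> 'I_n}, \sum_j (idx j : nat) = k.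
Proof.
move=> hn; elim: m' k => [|m' IH] k hk.
  exists [ffun _ => Ordinal hn]; rewrite big_ord0; lia.
have hk' : (k - minn k n.-1 <= m' * n.-1)%N.
  rewrite mulSn in hk; move: hk; set x := n.-1; set y := (m' * x)%N; move=> hk.
  rewrite /minn; case: ltnP => hh1; lia.
have [idx' hidx'] := IH _ hk'.
have hc : (minn k n.-1 < n)%N.
  by apply: leq_ltn_trans (geq_minr _ _) _; rewrite prednK.
exists [ffun j : 'I_m'.+1 => if unlift ord0 j is Some j' then idx' j' else Ordinal hc].
rewrite big_ord_recl !ffunE unlift_none.
under eq_bigr do rewrite ffunE liftK.
rewrite hidx' /=.
move: (geq_minl k n.-1); set c := minn k n.-1; lia.
Qed.

End Tensor.

Theorem theorem4 (R : realType) (m n : nat) (h : 'rV[R]_(m * n.-1).+1) :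
  (2 <= m)%N -> (0 < n)%N -> ~~ odd (m * n.-1) ->
  let r : nat := \rank (hankel_matrix h) in
  strong_hankel h <->
  ((exists (alpha xi : 'I_r -> R),
       (forall k, 0 < alpha k) /\
       hankel_tensor h = \sum_(k < r) tscale (alpha k) (rank1 m (vandv n (xi k))))
   \/
   (0 < r)%N /\
   exists (alpha xi : 'I_r.-1 -> R) (a : R),
       (forall k, 0 < alpha k) /\ 0 < a /\
       hankel_tensor h = \sum_(k < r.-1) tscale (alpha k) (rank1 m (vandv n (xi k)))
                         + tscale a (rank1 m (e_last R n))).
Proof.
move=> hm hn hev r.
set N := (m * n.-1)./2.
have hN : N.*2 = (m * n.-1)%N.
  by rewrite /N -[RHS]odd_double_half (negbTE hev) add0n.
set hh := fun k : nat => h 0 (inord k).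
have HMe : hankel_matrix h = HM N hh by apply/matrixP => i j; rewrite !mxE.
have Ht : forall idx, hankel_tensor h idx = hh (\sum_j (idx j : nat)).
  by move=> idx; rewrite ffunE.
have Hsum_le : forall idx : {ffun 'I_m -> 'I_n}, (\sum_j (idx j : nat) <= N.*2)%N.
  move=> idx; rewrite hN.
  have -> : (m * n.-1 = \sum_(j < m) n.-1)%N by rewrite sum_nat_const card_ord.
  by apply: leq_sum => j _; rewrite -ltnS prednK.
have Hvt : forall sz (al xi : 'I_sz -> R) (idx : {ffun 'I_m -> 'I_n}),
    (\sum_(k < sz) tscale (al k) (rank1 m (vandv n (xi k)))) idx =
    \sum_(k < sz) al k * xi k ^+ (\sum_j (idx j : nat)).
  by move=> sz al xi idx; rewrite sum_ffunE; apply: eq_bigr => k _; rewrite ffunE rank1_vand_entry.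
split.
- move=> Hs.
  have Hpsd : forall f : {poly R}, (size f <= N.+1)%N -> 0 <= Lf N hh (f * f).
    move=> f sf; have := Hs.2 (\col_i f`_i); rewrite HMe.
    suff -> : ((\col_i f`_i)^T *m HM N hh *m \col_i f`_i) 0 0 = Lf N hh (f * f) by [].
    rewrite Lf_mul // mxE exchange_big; apply: eq_bigr => j _.
    rewrite mxE mulr_suml; apply: eq_bigr => i _; rewrite !mxE; ring.
  have [p [q [qm qs hpN H1 H2]]] := exists_q Hpsd.
  have [s [us ss Eq apos [hmom htop]]] := core qm qs hpN H1 H2.
  set a := Lf N hh ((q * 'X^(N - p)) * (q * 'X^(N - p))) in htop.
  have a0 : 0 <= a.
    by apply: Hpsd; rewrite size_mulXn ?monic_neq0 // qs; lia.
  set al := fun k : 'I_(size s) => Lf N hh (lag s s`_k).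
  set xi := fun k : 'I_(size s) => s`_k.
  have alpos : forall k, 0 < al k by move=> k; apply: apos; apply: mem_nth.
  have hsum : forall k, \sum_(x <- s) Lf N hh (lag s x) * x ^+ k = \sum_(i < size s) al i * xi i ^+ k.
    by move=> k; rewrite (big_nth 0) big_mkord.
  have hv : forall k, (k <= N.*2)%N -> hh k = \sum_(i < size s) al i * xi i ^+ k + a * (k == N.*2)%:R.
    move=> k hk; case: (ltngtP k N.*2) => hk'.
    + by rewrite hmom // hsum /= mulr0n mulr0 addr0.
    + by move: hk; rewrite leqNgt hk'.
    + by rewrite hk' htop hsum /= mulr1n mulr1.
  case: (eqVneq a 0) => ha.
    have hv' : forall k, (k <= N.*2)%N -> hh k = \sum_(i < size s) al i * xi i ^+ k.
      by move=> k hk; rewrite hv // ha mul0r addr0.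
    have hrk : r = size s.
      rewrite /r HMe (factor_v hv') rank_factor //; first by move=> k; rewrite gt_eqF.
      by apply: Wv_rowfree => //; rewrite ss; lia.
    left; rewrite hrk; exists al, xi; split => //.
    by apply/ffunP => idx; rewrite Ht Hvt hv ?Hsum_le // ha mul0r addr0.
  have hrk : r = (size s).+1.
    rewrite /r HMe (factor_e hv) rank_factor //.
      by move=> k; rewrite /de; case: (unliftP ord0 k) => [k'|] _; [exact: lt0r_neq0 (alpos k') | exact: ha].
    by apply: We_rowfree Eq => //; rewrite ss.
  right; rewrite hrk; split => //; exists al, xi, a; split => //; split.
    by rewrite lt_def ha.
  apply/ffunP => idx; rewrite Ht ffunE Hvt ffunE rank1_e_entry // -hN hv ?Hsum_le //.
move=> Hd; rewrite /strong_hankel HMe.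
have key : forall sz (al xi : 'I_sz -> R) (a : R), (forall k, 0 <= al k) -> 0 <= a ->
    (forall idx : {ffun 'I_m -> 'I_n}, hh (\sum_j (idx j : nat)) =
        \sum_(k < sz) al k * xi k ^+ (\sum_j (idx j : nat)) + a * ((\sum_j (idx j : nat)) == N.*2)%:R) ->
    psd (HM N hh).
  move=> sz al xi a al0 a0 H.
  have hv : forall k, (k <= N.*2)%N -> hh k = \sum_(i < sz) al i * xi i ^+ k + a * (k == N.*2)%:R.
    move=> k hk; have hk2 : (k <= m * n.-1)%N by rewrite -hN.
    have [idx <-] := @idx_surj n m k hn hk2; exact: H.
  apply: psd_factor (factor_e hv) => k.
  by rewrite /de; case: (unliftP ord0 k) => [k'|] _.
case: Hd => [[al [xi [apos E]]]|[r0 [al [xi [a [apos [apos' E]]]]]]].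
  apply: (@key _ al xi 0) => //; first by move=> k; apply: ltW.
  by move=> idx; rewrite -Ht E Hvt mul0r addr0.
apply: (@key _ al xi a) => //; first by move=> k; apply: ltW.
  exact: ltW.
by move=> idx; rewrite -Ht E ffunE Hvt ffunE rank1_e_entry // hN.
Qed.
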